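(* Consider the hierarchical Gaussian $K$-armed bandit and the algorithm HierTS described in the context, and let $\sigma_{0,\max} = \max_{i \in \mathcal{V}} \sigma_{0,i}$. Then the inequality $c\, \hat{\sigma}_{t,i}^{-2} \geq \hat{\sigma}_{t+1,i}^{-2}$ holds for every node $i \in \mathcal{V}$ and every round $t$ with $c = 1 + \sigma_{0,\max}^2/\sigma^2$. Moreover, if $\sigma \geq \sigma_{0,\max}$, it holds with $c = 2$.
   Context: Tree and model. Let $\mathcal{T}$ be a rooted tree with node set $\mathcal{V}$, root labeled $1$, in which every internal node has at least $2$ children. For a node $i \neq 1$, $\mathsf{pa}(i)$ is its parent; $\mathsf{ch}(i)$ is the set of children of $i$. The leaves form the action set $\mathcal{A}$, $|\mathcal{A}| = K$. Node parameters $\theta_{*, i} \in \mathbb{R}$ are generated as $\theta_{*, 1} \sim \mathcal{N}(\mu_1, \sigma_{0,1}^2)$ and, for $i \neq 1$, $\theta_{*, i} \mid \theta_{*, \mathsf{pa}(i)} \sim \mathcal{N}(\theta_{*, \mathsf{pa}(i)}, \sigma_{0,i}^2)$, with known $\mu_1$ and $\sigma_{0,i} > 0$. In each round $t$ the agent takes $A_t \in \mathcal{A}$ and observes $Y_t \sim \mathcal{N}(\theta_{*, A_t}, \sigma^2)$ (independent noise, known $\sigma > 0$). The history is $H_t = (A_\ell, Y_\ell)_{\ell < t}$. HierTS samples $\Theta_t$ exactly from the posterior of $(\theta_{*,i})_{i \in \mathcal{V}}$ given $H_t$ and takes $A_t = \arg\max_{a \in \mathcal{A}} \theta_{t,a}$.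 Conditional posterior variances. For a node $i \neq 1$, $\hat{\sigma}_{t,i}^2$ is the variance of $\theta_{*, i}$ conditioned on $H_t$ and on $\theta_{*, \mathsf{pa}(i)}$ (it does not depend on the parent's value); for the root, $\hat{\sigma}_{t,1}^2 = \mathrm{Var}(\theta_{*,1} \mid H_t)$. Explicitly, with $\mathcal{S}_{t,a} = \{\ell < t : A_\ell = a\}$: for an action node $a$, $\hat{\sigma}_{t,a}^{-2} = \sigma_{0,a}^{-2} + |\mathcal{S}_{t,a}| \sigma^{-2}$; for a non-action node $i$, $\hat{\sigma}_{t,i}^{-2} = \sigma_{0,i}^{-2} + \sum_{j \in \mathsf{ch}(i)} \tilde{\sigma}_{t,j}^{-2}$, where recursively $\tilde{\sigma}_{t,j}^{2} = \sigma_{0,j}^2 + \sigma^2/|\mathcal{S}_{t,j}|$ for an action node $j$ (with $\tilde{\sigma}_{t,j}^{-2} = 0$ if $|\mathcal{S}_{t,j}| = 0$) and $\tilde{\sigma}_{t,j}^{2} = \sigma_{0,j}^2 + \big(\sum_{k \in \mathsf{ch}(j)} \tilde{\sigma}_{t,k}^{-2}\big)^{-1}$ for a non-action node $j$. *)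

(* Defs.v *)
From HB Require Import structures.
From mathcomp Require Import all_boot all_order all_algebra.
Set Implicit Arguments. Unset Strict Implicit. Unset Printing Implicit Defensive.
Import Order.TTheory GRing.Theory Num.Theory.
Local Open Scope ring_scope.

Section HierBandit.
Variables (R : realFieldType) (V : finType) (root : V) (pa : V -> V).

Definition ch (i : V) : {set V} := [set j | (j != root) && (pa j == i)].

Definition is_action (i : V) : bool := ch i == set0.

(* rooted tree with root [root]: the root is its own parent (convention),
   every node reaches the root by following parents, and every internal
   node has at least two children. *)
Definition rooted_tree : Prop :=
  pa root = root /\
  (forall j : V, iter #|V| pa j = root) /\
  (forall i : V, ~~ is_action i -> (2 <= #|ch i|)%N).

Variables (sigma0 : V -> R) (sigma : R) (A : nat -> V).

Definition count (t : nat) (a : V) : nat := \sum_(l < t) (A l == a).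

(* tilde sigma_{t,j}^{-2}, computed by structural recursion with fuel;
   an infinite variance (no observation below j) is precision 0. *)
Fixpoint tprec_fuel (fuel : nat) (t : nat) (j : V) : R :=
  match fuel with
  | O => 0
  | S f =>
    if is_action j then
      (if count t j == 0%N then 0
       else (sigma0 j ^+ 2 + sigma ^+ 2 / (count t j)%:R)^-1)
    else
      let s := \sum_(k in ch j) tprec_fuel f t k in
      if s == 0 then 0 else (sigma0 j ^+ 2 + s^-1)^-1
  end.

Definition tprec (t : nat) (j : V) : R := tprec_fuel #|V| t j.

Definition hprec (t : nat) (i : V) : R :=
  if is_action i then (sigma0 i ^+ 2)^-1 + (count t i)%:R / sigma ^+ 2
  else (sigma0 i ^+ 2)^-1 + \sum_(j in ch i) tprec t j.

Definition sigma0_max : R := \big[Num.max/0]_(i : V) sigma0 i.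

End HierBandit.

(* Main.v *)
From HB Require Import structures.
From mathcomp Require Import all_boot all_order all_algebra.
From mathcomp Require Import ring lra.
Require Import Defs.
Import Order.TTheory GRing.Theory Num.Theory.
Set Implicit Arguments. Unset Strict Implicit.
Local Open Scope ring_scope.
Section S.
Variable R : realFieldType.
Definition hh (c x : R) : R := if x == 0 then 0 else (c + x^-1)^-1.
Lemma hhE c x : 0 < c -> 0 <= x -> hh c x = x / (c * x + 1).
Proof.
move=> c0 x0; rewrite /hh; case: eqP => [->|/eqP nx]; first by rewrite mul0r.
have cx : c * x + 1 != 0 by apply/lt0r_neq0; nra.
by field; rewrite nx cx.
Qed.
Lemma hh_core c x y : 0 < c -> 0 <= x -> x <= y ->
  0 <= hh c x /\ hh c x <= hh c y /\ hh c y <= hh c x + (y - x).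
Proof.
move=> c0 x0 xy; have y0 : 0 <= y by lra.
rewrite !hhE //.
have P0 : 0 < c * x + 1 by nra.
have Q0 : 0 < c * y + 1 by nra.
split; first by apply: divr_ge0; lra.
split.
  rewrite ler_pdivrMr // mulrAC ler_pdivlMr //; nra.
have -> : y / (c * y + 1) = x / (c * x + 1) + (y - x) / ((c * x + 1) * (c * y + 1)).
  field; apply/andP; split; apply/lt0r_neq0 => //.
rewrite lerD2l ler_pdivrMr; last by nra.
have cx0 : 0 <= c * x by apply: mulr_ge0; lra.
have cy0 : 0 <= c * y by apply: mulr_ge0; lra.
have D1 : 1 <= (c * x + 1) * (c * y + 1) by nra.
have yx : 0 <= y - x by lra.
rewrite -[X in X <= _]mulr1; exact: ler_wpM2l.
Qed.
End S.
Require Import Defs.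
Section T.
Variables (R : realFieldType) (V : finType) (root : V) (pa : V -> V).
Variables (sigma0 : V -> R) (sigma : R) (A : nat -> V).
Variable a : V.

Fixpoint wf (f : nat) (j : V) : nat :=
  match f with
  | O => 0%N
  | S f => if is_action root pa j then (a == j : nat) else (\sum_(k in ch root pa j) wf f k)%N
  end.

Lemma wf_anc f j : (0 < wf f j)%N -> exists m, iter m pa a = j.
Proof.
elim: f j => [|f IH] j //=; case: ifP => _.
  by case: eqP => // <- _; exists 0%N.
rewrite lt0n sum_nat_eq0 => /forallPn [k]; rewrite negb_imply -lt0n => /andP [].
rewrite inE => /andP [_ /eqP <-] /IH [m <-]; by exists m.+1; rewrite iterS.
Qed.

Hypothesis tree : rooted_tree root pa.

Lemma iter_root n : iter n pa root = root.
Proof. case: tree => pr _; elim: n => //= n ->; exact pr. Qed.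

Lemma iter_big n j : (#|V| <= n)%N -> iter n pa j = root.
Proof.
case: tree => _ [hN _] le; rewrite -(subnK le) iterD hN; exact: iter_root.
Qed.

Lemma cyc d j : iter d.+1 pa j = j -> j = root.
Proof.
move=> h; have hm : forall m, iter (d.+1 * m) pa j = j.
  elim=> [|m IH]; first by rewrite muln0.
  by rewrite (mulnSr d.+1 m) addnC iterD IH h.
by rewrite -(hm #|V|) iter_big // leq_pmull.
Qed.

Lemma anc_uniq j k1 k2 m1 m2 : k1 \in ch root pa j -> k2 \in ch root pa j ->
  iter m1 pa a = k1 -> iter m2 pa a = k2 -> k1 = k2.
Proof.
wlog le : k1 k2 m1 m2 / (m1 <= m2)%N.
  move=> H h1 h2 e1 e2; case: (leqP m1 m2) => l; first exact: (H _ _ m1 m2).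
  by symmetry; apply: (H _ _ m2 m1) => //; apply: ltnW.
rewrite !inE => /andP [_ /eqP p1] /andP [n2 /eqP p2] e1 e2.
move: e2; rewrite -(subnK le) iterD e1.
case: (m2 - m1)%N => [//|d] e2.
rewrite iterSr p1 in e2.
have hj : iter d.+1 pa j = j by rewrite iterS e2 p2.
move: (@cyc d j hj) => jr; move: e2; rewrite jr iter_root => e2.
by rewrite -e2 eqxx in n2.
Qed.

Lemma wf_le1 f j : (wf f j <= 1)%N.
Proof.
elim: f j => [|f IH] j //=; case: ifP => _; first by case: (a == j).
case: (boolP [exists k in ch root pa j, 0 < wf f k]%N).
  case/exists_inP => k kin kp; rewrite (bigD1 k) //= big1 ?addn0 //.
  move=> k' /andP [k'in nk]; apply/eqP; rewrite -leqn0 leqNgt; apply/negP => kp'.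
  case: (@wf_anc _ _ kp) => m1 e1; case: (@wf_anc _ _ kp') => m2 e2.
  by rewrite (@anc_uniq _ _ _ _ _ kin k'in e1 e2) eqxx in nk.
move/exists_inPn => h; rewrite big1 // => k /h; by rewrite lt0n negbK => /eqP.
Qed.
End T.
Section U.
Variables (R : realFieldType) (V : finType) (root : V) (pa : V -> V).
Variables (sigma0 : V -> R) (sigma : R) (A : nat -> V).
Hypothesis s0 : 0 < sigma.
Hypothesis s00 : forall i, 0 < sigma0 i.

Lemma count_S t j : count A t.+1 j = (count A t j + (A t == j))%N.
Proof. by rewrite /count big_ord_recr. Qed.

Lemma hdef c n : (if n == 0%N then 0 else (c + sigma^+2 / n%:R)^-1) = hh c (n%:R / sigma^+2).
Proof.
rewrite /hh; case: n => [|n].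
  by rewrite mul0r !eqxx.
rewrite mulf_eq0 invr_eq0 pnatr_eq0 expf_eq0 (gt_eqF s0) andbF /= invf_div //.
Qed.

Notation T := (tprec_fuel root pa sigma0 sigma A).

Lemma delta f t j :
 0 <= T f t j /\ T f t j <= T f t.+1 j /\ T f t.+1 j <= T f t j + (wf root pa (A t) f j)%:R / sigma^+2.
Proof.
have c0 : forall i, 0 < sigma0 i ^+ 2 by move=> i; apply: exprn_gt0.
have ss : 0 < sigma ^+ 2 by apply: exprn_gt0.
elim: f j => [|f IH] j; first by rewrite /= mul0r addr0 lexx.
rewrite /=; case: ifP => act.
  rewrite count_S !hdef.
  have x0 : 0 <= (count A t j)%:R / sigma ^+ 2 by apply: divr_ge0 => //; apply: ltW.
  case: eqP => e /=.
    have := @hh_core _ (sigma0 j ^+ 2) ((count A t j)%:R / sigma ^+ 2) ((count A t j + 1)%N%:R / sigma ^+ 2) (c0 j) x0.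
    rewrite natrD -mulrBl addrAC subrr add0r.
    have -> : (count A t j)%:R / sigma ^+ 2 <= ((count A t j)%:R + 1) / sigma ^+ 2.
      by rewrite ler_pM2r ?invr_gt0 // lerDl.
    by move/(_ isT).
  rewrite addn0 mul0r addr0 lexx; split => //.
  by have [] := @hh_core _ (sigma0 j ^+ 2) _ _ (c0 j) x0 (lexx _).
set s := \sum_(k in _) T f t k; set s' := \sum_(k in _) T f t.+1 k.
have e1 : (if s == 0 then 0 else (sigma0 j ^+ 2 + s^-1)^-1) = hh (sigma0 j ^+ 2) s by [].
have e2 : (if s' == 0 then 0 else (sigma0 j ^+ 2 + s'^-1)^-1) = hh (sigma0 j ^+ 2) s' by [].
rewrite e1 e2.
have hs0 : 0 <= s by apply: sumr_ge0 => k _; case: (IH k).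
have hss : s <= s' by apply: ler_sum => k _; case: (IH k) => _ [].
have hs' : s' <= s + (\sum_(k in ch root pa j) wf root pa (A t) f k)%N%:R / sigma ^+ 2.
  rewrite natr_sum mulr_suml -big_split /=; apply: ler_sum => k _; by case: (IH k) => _ [].
have [h1 [h2 h3]] := @hh_core _ (sigma0 j ^+ 2) s s' (c0 j) hs0 hss.
split => //; split => //; apply: (le_trans h3); rewrite lerD2l; lra.
Qed.
End U.

Section W.
Variables (R : realFieldType) (V : finType) (root : V) (pa : V -> V).
Variables (sigma0 : V -> R) (sigma : R) (A : nat -> V).
Hypothesis tree : rooted_tree root pa.
Hypothesis s0 : 0 < sigma.
Hypothesis s00 : forall i, 0 < sigma0 i.

Notation H := (hprec root pa sigma0 sigma A).

Lemma H_lb t i : (sigma0 i ^+ 2)^-1 <= H t i.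
Proof.
rewrite /hprec; case: ifP => _; rewrite lerDl.
  by apply: divr_ge0 => //; apply: exprn_ge0; apply: ltW.
by apply: sumr_ge0 => j _; case: (@delta _ _ root pa sigma0 sigma A s0 s00 #|V| t j).
Qed.

Lemma H_step t i : H t.+1 i <= H t i + (sigma ^+ 2)^-1.
Proof.
have ss : 0 < sigma ^+ 2 by apply: exprn_gt0.
rewrite /hprec; case: ifP => act; rewrite -addrA lerD2l.
  rewrite count_S natrD mulrDl lerD2l.
  by case: (A t == i); rewrite ?mul1r ?mul0r // invr_ge0 ltW.
apply: (@le_trans _ _ (\sum_(j in ch root pa i) (tprec root pa sigma0 sigma A t j +
    (wf root pa (A t) #|V| j)%:R / sigma ^+ 2))).
  by apply: ler_sum => j _; case: (@delta _ _ root pa sigma0 sigma A s0 s00 #|V| t j) => _ [].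
rewrite big_split /= lerD2l -mulr_suml -natr_sum.
have := wf_le1 (A t) tree #|V|.+1 i; rewrite /= act => le1; rewrite -[X in _ <= X]mul1r ler_pM2r ?invr_gt0 //.
by rewrite (_ : 1 = 1%:R) // ler_nat.
Qed.
End W.

Unset Implicit Arguments.
Unset Strict Implicit.

Theorem lemma4 (R : realFieldType) (V : finType) (root : V) (pa : V -> V)
  (sigma0 : V -> R) (sigma : R) (A : nat -> V) :
  rooted_tree root pa ->
  (forall i : V, 0 < sigma0 i) ->
  0 < sigma ->
  (forall l : nat, is_action root pa (A l)) ->
  (forall (t : nat) (i : V),
     hprec root pa sigma0 sigma A t.+1 i <=
     (1 + sigma0_max sigma0 ^+ 2 / sigma ^+ 2) * hprec root pa sigma0 sigma A t i) /\
  (sigma0_max sigma0 <= sigma ->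
   forall (t : nat) (i : V),
     hprec root pa sigma0 sigma A t.+1 i <= 2 * hprec root pa sigma0 sigma A t i).
Proof.
move=> tree s00 s0 _.
have ss : 0 < sigma ^+ 2 by apply: exprn_gt0.
have Mi : forall i, sigma0 i <= sigma0_max sigma0 by move=> i; apply: le_bigmax.
set M := sigma0_max sigma0 in Mi *.
have key : forall t i, hprec root pa sigma0 sigma A t.+1 i <=
     (1 + M ^+ 2 / sigma ^+ 2) * hprec root pa sigma0 sigma A t i.
  move=> t i; apply: (le_trans (H_step A tree s0 s00 t i)).
  rewrite mulrDl mul1r lerD2l.
  have hi := s00 i; have mi := Mi i.
  apply: (@le_trans _ _ (M ^+ 2 / sigma ^+ 2 * (sigma0 i ^+ 2)^-1)); last first.
    apply: ler_wpM2l; last exact: H_lb.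
    by apply: divr_ge0; [apply: exprn_ge0; lra | apply: ltW].
  rewrite mulrAC -[X in X <= _]mul1r ler_pM2r ?invr_gt0 //.
  rewrite ler_pdivlMr ?exprn_gt0 // mul1r !expr2; nra.
split=> // le t i; apply: (le_trans (key t i)).
have hi := s00 i; have mi := Mi i.
apply: ler_wpM2r.
  have hl : (sigma0 i ^+ 2)^-1 <= hprec root pa sigma0 sigma A t i by exact: H_lb.
  apply: le_trans hl; apply: ltW; rewrite invr_gt0; exact: exprn_gt0.
have M0 : 0 <= M by lra.
have hM : M ^+ 2 / sigma ^+ 2 <= 1.
  rewrite ler_pdivrMr // mul1r !expr2; apply: ler_pM; lra.
lra.
Qed.
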